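(* Let $n\ge j\ge1$ be integers, and let $\lambda=(\lambda_1,\lambda_2,\lambda_3)\in\mathbb Z^3$ with $\lambda_1\ge\lambda_2\ge\lambda_3$ and $\max\{\lambda_1-\lambda_2,\lambda_2-\lambda_3\}\le n-j$. Then the number of $(ZK,K_n)$-double cosets contained in $ZK\lambda(\varpi)K$ is at most $q^{4n-4j}(1+1/q)^3$.
   Context: $F$ is a $p$-adic field with $p\ne2,3$, ring of integers $R$, uniformizer $\varpi$, residue field of order $q$. $G=GL_3(F)$, $K=GL_3(R)$, $Z$ is the center of $G$, $K_n$ is the subgroup of $K$ of elements congruent to the identity mod $\varpi^n$, and $\lambda(\varpi)=\operatorname{diag}(\varpi^{\lambda_1},\varpi^{\lambda_2},\varpi^{\lambda_3})$. *)

(* Defs.v *)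
From HB Require Import structures.
From mathcomp Require Import all_boot all_order all_algebra.
Set Implicit Arguments. Unset Strict Implicit. Unset Printing Implicit Defensive.
Import Order.TTheory GRing.Theory Num.Theory.
Local Open Scope ring_scope.

Section Defs.
Variable F : fieldType.
Variable v : F -> int.  (* normalized discrete valuation, meaningful on nonzero elements *)

Definition vge (x : F) (k : int) : Prop := x = 0 \/ k <= v x.
Definition inR (x : F) : Prop := vge x 0.

(* F is a p-adic field with valuation v, residue characteristic p and residue
   field of order q: a complete, discretely valued field of characteristic 0
   with finite residue field (equivalently, a finite extension of Q_p). *)
Record padic_field (p q : nat) : Prop := {
  v_mul : forall x y, x != 0 -> y != 0 -> v (x * y) = v x + v y;
  v_add : forall x y, x != 0 -> y != 0 -> x + y != 0 ->
            Num.min (v x) (v y) <= v (x + y);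
  v_unif : exists pi : F, pi != 0 /\ v pi = 1;
  char0 : forall m : nat, (m%:R : F) = 0 -> m = 0%N;
  resid_char : prime p /\ vge (p%:R) 1;
  resid_card : exists s : seq F, size s = q /\
      (forall i, (i < q)%N -> inR (nth 0 s i)) /\
      (forall i k, (i < q)%N -> (k < q)%N -> i != k ->
          ~ vge (nth 0 s i - nth 0 s k) 1) /\
      (forall x, inR x -> exists2 i, (i < q)%N & vge (x - nth 0 s i) 1);
  complete : forall u : nat -> F,
      (forall k : int, exists N, forall m m', (N <= m)%N -> (N <= m')%N ->
          vge (u m - u m') k) ->
      exists l, forall k : int, exists N, forall m, (N <= m)%N -> vge (u m - l) k
}.

Definition inK (g : 'M[F]_3) : Prop :=
  (forall i j, inR (g i j)) /\ \det g != 0 /\ v (\det g) = 0.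
Definition inKn (n : nat) (g : 'M[F]_3) : Prop :=
  inK g /\ forall i j, vge ((g - 1%:M) i j) n%:Z.
(* Z = center of GL_3(F) = nonzero scalar matrices *)
Definition inZ (g : 'M[F]_3) : Prop := exists a : F, a != 0 /\ g = a%:M.
Definition inZK (g : 'M[F]_3) : Prop :=
  exists z k, inZ z /\ inK k /\ g = z *m k.
Definition lamw (pi : F) (l1 l2 l3 : int) : 'M[F]_3 :=
  diag_mx (\row_(i < 3) pi ^ (nth 0 [:: l1; l2; l3] i)).
Definition inZKlK (pi : F) (l1 l2 l3 : int) (g : 'M[F]_3) : Prop :=
  exists a b, inZK a /\ inK b /\ g = a *m lamw pi l1 l2 l3 *m b.
Definition same_dc (n : nat) (g h : 'M[F]_3) : Prop :=
  exists a k, inZK a /\ inKn n k /\ h = a *m g *m k.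
End Defs.

(* Main.v *)
Require Import Defs.
From HB Require Import structures.
From mathcomp Require Import all_boot all_order all_algebra.
From mathcomp Require Import ring lra zify.
From Stdlib Require Import ClassicalEpsilon Classical.
Import Order.TTheory GRing.Theory Num.Theory.
Local Open Scope ring_scope.

Lemma v1 {F : fieldType} {v : F -> int} {p q : nat} (HF : padic_field v p q) : v 1 = 0.
Proof. have := v_mul HF (oner_neq0 F) (oner_neq0 F); rewrite mulr1 => h.
have : v 1 + v 1 = v 1 + 0 by rewrite addr0 -h.
by move/addrI. Qed.

Lemma vV {F : fieldType} {v : F -> int} {p q : nat} (HF : padic_field v p q) x :
  x != 0 -> v x^-1 = - v x.
Proof.
move=> x0; have := v_mul HF x0 (invr_neq0 x0); rewrite mulfV // (v1 HF) => h.
lia.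
Qed.

Lemma vN {F : fieldType} {v : F -> int} {p q : nat} (HF : padic_field v p q) x :
  x != 0 -> v (- x) = v x.
Proof.
move=> x0.
have n10 : (-1 : F) != 0 by rewrite oppr_eq0 oner_neq0.
have h1 : v (-1) = 0.
  have := v_mul HF n10 n10; rewrite mulrNN mulr1 (v1 HF) => h.
  lia.
by rewrite -mulN1r (v_mul HF n10 x0) h1 add0r.
Qed.

Lemma vexpn {F : fieldType} {v : F -> int} {p q : nat} (HF : padic_field v p q) x (k : nat) :
  x != 0 -> v (x ^+ k) = k%:Z * v x.
Proof.
move=> x0; elim: k => [|k IH]; first by rewrite expr0 (v1 HF) mul0r.
rewrite exprS (v_mul HF x0 (expf_neq0 _ x0)) IH; lia.
Qed.

Lemma vexpz {F : fieldType} {v : F -> int} {p q : nat} (HF : padic_field v p q) x (z : int) :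
  x != 0 -> v (x ^ z) = z * v x.
Proof.
move=> x0; case: z => k.
  by rewrite -exprnP (vexpn HF _ _ x0).
rewrite NegzE -exprnN (vV HF) ?expf_neq0 // (vexpn HF _ _ x0); lia.
Qed.

Lemma expz_neq0 {F : fieldType} (x : F) (z : int) : x != 0 -> x ^ z != 0.
Proof. by move=> x0; rewrite expfz_eq0 negb_and x0 orbT. Qed.

Lemma vge0 {F : fieldType} (v : F -> int) k : vge v 0 k.
Proof. by left. Qed.

Lemma vgeD {F : fieldType} {v : F -> int} {p q : nat} (HF : padic_field v p q) {x y k} :
  vge v x k -> vge v y k -> vge v (x + y) k.
Proof.
move=> [->|hx]; first by rewrite add0r.
move=> [->|hy]; first by rewrite addr0; right.
have [x0|x0] := eqVneq x 0; first by rewrite x0 add0r; right.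
have [y0|y0] := eqVneq y 0; first by rewrite y0 addr0; right.
have [s0|s0] := eqVneq (x + y) 0; first by left.
right; apply: le_trans (v_add HF x0 y0 s0).
by rewrite le_min hx hy.
Qed.

Lemma vgeN {F : fieldType} {v : F -> int} {p q : nat} (HF : padic_field v p q) {x k} :
  vge v x k -> vge v (- x) k.
Proof.
move=> [->|hx]; first by rewrite oppr0; left.
have [x0|x0] := eqVneq x 0; first by rewrite x0 oppr0; left.
by right; rewrite (vN HF _ x0).
Qed.

Lemma vgeB {F : fieldType} {v : F -> int} {p q : nat} (HF : padic_field v p q) {x y k} :
  vge v x k -> vge v y k -> vge v (x - y) k.
Proof. by move=> hx hy; apply: (vgeD HF hx (vgeN HF hy)). Qed.

Lemma vgeM {F : fieldType} {v : F -> int} {p q : nat} (HF : padic_field v p q) {x y k l} :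
  vge v x k -> vge v y l -> vge v (x * y) (k + l).
Proof.
move=> [->|hx]; first by rewrite mul0r; left.
move=> [->|hy]; first by rewrite mulr0; left.
have [x0|x0] := eqVneq x 0; first by rewrite x0 mul0r; left.
have [y0|y0] := eqVneq y 0; first by rewrite y0 mulr0; left.
right; rewrite (v_mul HF x0 y0); lia.
Qed.

Lemma vge_le {F : fieldType} (v : F -> int) {x k l} :
  k <= l -> vge v x l -> vge v x k.
Proof. by move=> kl [->|h]; [left|right; apply: le_trans h]. Qed.

Lemma vge_eq {F : fieldType} (v : F -> int) {x k l} :
  k = l -> vge v x l -> vge v x k.
Proof. by move=> ->. Qed.

Lemma vge_expz {F : fieldType} {v : F -> int} {p q : nat} (HF : padic_field v p q) pi (z : int) :
  pi != 0 -> v pi = 1 -> vge v (pi ^ z) z.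
Proof. by move=> p0 vp; right; rewrite (vexpz HF _ _ p0) vp mulr1. Qed.

Lemma vge_sum {F : fieldType} {v : F -> int} {p q : nat} (HF : padic_field v p q) (I : finType)
  (f : I -> F) k : (forall i, vge v (f i) k) -> vge v (\sum_i f i) k.
Proof.
move=> h; apply: (big_ind (fun x => vge v x k)); first by left.
  by move=> x y hx hy; apply: (vgeD HF); [exact: hx|exact: hy].
by move=> i _; apply: h.
Qed.

Lemma vge_prod {F : fieldType} {v : F -> int} {p q : nat} (HF : padic_field v p q) (I : finType)
  (f : I -> F) : (forall i, vge v (f i) 0) -> vge v (\prod_i f i) 0.
Proof.
move=> h; apply: (big_ind (fun x => vge v x 0)).
- by right; rewrite (v1 HF).
- by move=> x y hx hy; have := vgeM HF hx hy; rewrite addr0.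
by move=> i _; apply: h.
Qed.

Definition isunit {F : fieldType} (v : F -> int) (x : F) : bool := (x != 0) && (v x == 0).

Lemma vge_unitM {F : fieldType} {v : F -> int} {p q : nat} (HF : padic_field v p q) {c x k} :
  isunit v c -> vge v (c * x) k -> vge v x k.
Proof.
move=> /andP [c0 /eqP vc] h.
have -> : x = c^-1 * (c * x) by rewrite mulrA mulVf // mul1r.
have hc : vge v c^-1 0 by right; rewrite (vV HF _ c0) vc.
by have := vgeM HF hc h; rewrite add0r.
Qed.

Lemma unitV {F : fieldType} {v : F -> int} {p q : nat} (HF : padic_field v p q) {c} :
  isunit v c -> isunit v c^-1.
Proof. by move=> /andP [c0 /eqP vc]; rewrite /isunit invr_eq0 c0 (vV HF _ c0) vc. Qed.

Lemma unitM {F : fieldType} {v : F -> int} {p q : nat} (HF : padic_field v p q) {c d} :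
  isunit v c -> isunit v d -> isunit v (c * d).
Proof.
move=> /andP [c0 /eqP vc] /andP [d0 /eqP vd].
by rewrite /isunit mulf_neq0 // (v_mul HF c0 d0) vc vd.
Qed.

Lemma unit_inR {F : fieldType} {v : F -> int} {c : F} : isunit v c -> inR v c.
Proof. by move=> /andP [_ /eqP vc]; right; rewrite vc. Qed.

Lemma nonunit {F : fieldType} {v : F -> int} {x : F} : inR v x -> ~~ isunit v x -> vge v x 1.
Proof.
move=> [->|hx]; first by left.
rewrite /isunit negb_and negbK => /orP [/eqP ->|hv]; first by left.
by right; lia.
Qed.
Fixpoint digt {F : fieldType} {q : nat} (r : 'I_q -> F) (d : F -> 'I_q) (pi : F) (k : nat) (x : F)
  : k.-tuple 'I_q :=
  match k return k.-tuple 'I_q with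
  | 0 => [tuple]
  | k'.+1 => cons_tuple (d x) (digt r d pi k' ((x - r (d x)) / pi))
  end.

Lemma inR_div_pi {F : fieldType} {v : F -> int} {p q : nat} (HF : padic_field v p q) {w x : F} :
  w != 0 -> v w = 1 -> vge v x 1 -> inR v (x / w).
Proof.
move=> p0 vp hx.
have hp : vge v w^-1 (-1) by right; rewrite (vV HF _ p0) vp.
by have := vgeM HF hx hp; rewrite subrr.
Qed.

Lemma digt_eq {F : fieldType} {v : F -> int} {p q : nat} (HF : padic_field v p q)
  (r : 'I_q -> F) (d : F -> 'I_q) pi :
  pi != 0 -> v pi = 1 ->
  (forall x, inR v x -> vge v (x - r (d x)) 1) -> (forall i, inR v (r i)) ->
  forall k x y, inR v x -> inR v y -> digt r d pi k x = digt r d pi k y ->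
  vge v (x - y) k%:Z.
Proof.
move=> p0 vp Hd Hr; elim=> [|k IH] x y hx hy /=.
  by move=> _; apply: (vgeB HF hx hy).
move/(congr1 val) => /= [hdxy /val_inj htl].
have hx' := inR_div_pi HF p0 vp (Hd x hx).
have hy' := inR_div_pi HF p0 vp (Hd y hy).
have := IH _ _ hx' hy' htl.
rewrite hdxy => h.
have e : x - y = pi * ((x - r (d y)) / pi - (y - r (d y)) / pi).
  by field.
rewrite e.
have hp : vge v pi 1 by right; rewrite vp.
by have := vgeM HF hp h; rewrite -[(k.+1)%:Z]/(1 + k%:Z).
Qed.
Definition o0 : 'I_3 := @Ordinal 3 0 isT.
Definition o1 : 'I_3 := @Ordinal 3 1 isT.
Definition o2 : 'I_3 := @Ordinal 3 2 isT.

Lemma ord3P (P : 'I_3 -> Prop) : P o0 -> P o1 -> P o2 -> forall i, P i.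
Proof.
move=> h0 h1 h2 [[|[|[|i]]] hi] //.
- by rewrite (_ : Ordinal hi = o0) //; apply: val_inj.
- by rewrite (_ : Ordinal hi = o1) //; apply: val_inj.
- by rewrite (_ : Ordinal hi = o2) //; apply: val_inj.
Qed.

Definition T2 (q k : nat) : finType :=
  ((k.-tuple 'I_q * k.-tuple 'I_q) +
   (((k.-1).-tuple 'I_q * k.-tuple 'I_q) + ((k.-1).-tuple 'I_q * (k.-1).-tuple 'I_q)))%type.

Definition p2code {F : fieldType} (v : F -> int) {q : nat} (r : 'I_q -> F) (d : F -> 'I_q)
  (pi : F) (k : nat) (x : 'I_3 -> F) : T2 q k :=
  match k return T2 q k with
  | 0 => inl ([tuple], [tuple])
  | k'.+1 =>
    if isunit v (x o0) then inl (digt r d pi k'.+1 (x o1 / x o0), digt r d pi k'.+1 (x o2 / x o0))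
    else if isunit v (x o1) then
      inr (inl (digt r d pi k' (x o0 / x o1 / pi), digt r d pi k'.+1 (x o2 / x o1)))
    else inr (inr (digt r d pi k' (x o0 / x o2 / pi), digt r d pi k' (x o1 / x o2 / pi)))
  end.

Lemma inl_inj' {A B : Type} {a a' : A} : @inl A B a = inl a' -> a = a'.
Proof. by case. Qed.
Lemma inr_inj' {A B : Type} {a a' : B} : @inr A B a = inr a' -> a = a'.
Proof. by case. Qed.
Lemma pair_inj' {A B : Type} {a a' : A} {b b' : B} : (a, b) = (a', b') -> a = a' /\ b = b'.
Proof. by case. Qed.

Lemma gen_step {F : fieldType} {v : F -> int} {p q : nat} (HF : padic_field v p q)
  {a b xi yi : F} {k : int} :
  isunit v a -> isunit v b -> vge v (yi / b - xi / a) k -> vge v (yi - (b / a) * xi) k.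
Proof.
move=> ua ub h.
have b0 : b != 0 by case/andP: ub.
have a0 : a != 0 by case/andP: ua.
have e : yi - (b / a) * xi = b * (yi / b - xi / a) by field; rewrite a0 b0.
rewrite e; have := vgeM HF (unit_inR ub) h; by rewrite add0r.
Qed.

Lemma gen_pi {F : fieldType} {v : F -> int} {p q : nat} (HF : padic_field v p q)
  { pi a b : F} {k : nat} :
  pi != 0 -> v pi = 1 -> vge v (a / pi - b / pi) k -> vge v (a - b) k.+1.
Proof.
move=> p0 vp h.
have e : a - b = pi * (a / pi - b / pi) by field.
rewrite e; have hp : vge v pi 1 by right; rewrite vp.
by have := vgeM HF hp h; rewrite -[(k.+1)%:Z]/(1 + k%:Z).
Qed.

Lemma inR_mulV {F : fieldType} {v : F -> int} {p q : nat} (HF : padic_field v p q) {x a : F} :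
  inR v x -> isunit v a -> inR v (x / a).
Proof.
move=> hx ua; have := vgeM HF hx (unit_inR (unitV HF ua)); by rewrite addr0.
Qed.

Lemma inR_mulVpi {F : fieldType} {v : F -> int} {p q : nat} (HF : padic_field v p q) { pi x a : F} :
  pi != 0 -> v pi = 1 -> inR v x -> ~~ isunit v x -> isunit v a -> inR v (x / a / pi).
Proof.
move=> p0 vp hx nx ua; apply: (inR_div_pi HF p0 vp).
have := vgeM HF (nonunit hx nx) (unit_inR (unitV HF ua)); by rewrite addr0.
Qed.

Lemma p2code_eq {F : fieldType} {v : F -> int} {p q : nat} (HF : padic_field v p q)
  (r : 'I_q -> F) (d : F -> 'I_q) pi :
  pi != 0 -> v pi = 1 ->
  (forall x, inR v x -> vge v (x - r (d x)) 1) -> (forall i, inR v (r i)) ->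
  forall k (x y : 'I_3 -> F), (forall i, inR v (x i)) -> (forall i, inR v (y i)) ->
  (exists i, isunit v (x i)) -> (exists i, isunit v (y i)) ->
  p2code v r d pi k x = p2code v r d pi k y ->
  exists c, isunit v c /\ forall i, vge v (y i - c * x i) k%:Z.
Proof.
move=> p0 vp Hd Hr [|k] x y hx hy [ix uix] [iy uiy] /=.
  move=> _; exists 1; split; first by rewrite /isunit oner_eq0 (v1 HF) eqxx.
  by move=> i; rewrite mul1r; apply: (vgeB HF (hy i) (hx i)).
have DE := digt_eq HF r d pi p0 vp Hd Hr.
case: (boolP (isunit v (x o0))) => ux0; case: (boolP (isunit v (y o0))) => uy0 /=.
- move/inl_inj'/pair_inj' => [h1 h2]; exists (y o0 / x o0); split; first by apply: (unitM HF uy0 (unitV HF ux0)).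
  have e1 := DE _ _ _ (inR_mulV HF (hx o1) ux0) (inR_mulV HF (hy o1) uy0) h1.
  have e2 := DE _ _ _ (inR_mulV HF (hx o2) ux0) (inR_mulV HF (hy o2) uy0) h2.
  apply: ord3P.
  + have x0 : x o0 != 0 by case/andP: ux0.
    by rewrite mulfVK // subrr; left.
  + by apply: (gen_step HF ux0 uy0); move: (vgeN HF e1); rewrite opprB; apply.
  + by apply: (gen_step HF ux0 uy0); move: (vgeN HF e2); rewrite opprB; apply.
- by case: (isunit v (y o1)) => E; case: E.
- by case: (isunit v (x o1)) => E; case: E.
- case: (boolP (isunit v (x o1))) => ux1; case: (boolP (isunit v (y o1))) => uy1 /=.
 +
  move/inr_inj'/inl_inj'/pair_inj' => [h1 h2]; exists (y o1 / x o1); split; first by apply: (unitM HF uy1 (unitV HF ux1)).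
  have e1 := DE _ _ _ (inR_mulVpi HF p0 vp (hx o0) ux0 ux1)
                      (inR_mulVpi HF p0 vp (hy o0) uy0 uy1) h1.
  have e2 := DE _ _ _ (inR_mulV HF (hx o2) ux1) (inR_mulV HF (hy o2) uy1) h2.
  apply: ord3P.
  * apply: (gen_step HF ux1 uy1); apply: (gen_pi HF p0 vp).
    by move: (vgeN HF e1); rewrite opprB; apply.
  * have x1 : x o1 != 0 by case/andP: ux1.
    by rewrite mulfVK // subrr; left.
  * by apply: (gen_step HF ux1 uy1); move: (vgeN HF e2); rewrite opprB; apply.
 + by move=> E; case: E.
 + by move=> E; case: E.
 +
  have ux2 : isunit v (x o2).
    move: uix; apply: (ord3P (fun i => isunit v (x i) -> isunit v (x o2))) => //.
    - by rewrite (negbTE ux0). - by rewrite (negbTE ux1).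
  have uy2 : isunit v (y o2).
    move: uiy; apply: (ord3P (fun i => isunit v (y i) -> isunit v (y o2))) => //.
    - by rewrite (negbTE uy0). - by rewrite (negbTE uy1).
  move/inr_inj'/inr_inj'/pair_inj' => [h1 h2]; exists (y o2 / x o2); split; first by apply: (unitM HF uy2 (unitV HF ux2)).
  have e1 := DE _ _ _ (inR_mulVpi HF p0 vp (hx o0) ux0 ux2)
                      (inR_mulVpi HF p0 vp (hy o0) uy0 uy2) h1.
  have e2 := DE _ _ _ (inR_mulVpi HF p0 vp (hx o1) ux1 ux2)
                      (inR_mulVpi HF p0 vp (hy o1) uy1 uy2) h2.
  apply: ord3P.
  * apply: (gen_step HF ux2 uy2); apply: (gen_pi HF p0 vp).
    by move: (vgeN HF e1); rewrite opprB; apply.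
  * apply: (gen_step HF ux2 uy2); apply: (gen_pi HF p0 vp).
    by move: (vgeN HF e2); rewrite opprB; apply.
  * have x2 : x o2 != 0 by case/andP: ux2.
    by rewrite mulfVK // subrr; left.
Qed.
Definition intm {F : fieldType} (v : F -> int) {m n : nat} (A : 'M[F]_(m, n)) := forall i j, inR v (A i j).

Lemma inR_sign {F : fieldType} {v : F -> int} {p q : nat} (HF : padic_field v p q) (b : nat) :
  inR v ((-1 : F) ^+ b).
Proof.
right; rewrite -signr_odd; case: (odd b); rewrite ?expr0 ?expr1 ?(v1 HF) //.
by rewrite (vN HF _ (oner_neq0 F)) (v1 HF).
Qed.

Lemma det_int {F : fieldType} {v : F -> int} {p q : nat} (HF : padic_field v p q) {n : nat}
  (A : 'M[F]_n) : intm v A -> inR v (\det A).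
Proof.
move=> hA; rewrite /determinant; apply: (vge_sum HF) => s.
rewrite -[0]addr0; apply: (vgeM HF); first exact: (inR_sign HF).
by apply: (vge_prod HF) => i; apply: hA.
Qed.

Lemma mul_int {F : fieldType} {v : F -> int} {p q : nat} (HF : padic_field v p q) {m n k : nat}
  (A : 'M[F]_(m, n)) (B : 'M[F]_(n, k)) : intm v A -> intm v B -> intm v (A *m B).
Proof.
move=> hA hB i j; rewrite mxE; apply: (vge_sum HF) => l.
by have := vgeM HF (hA i l) (hB l j); rewrite addr0.
Qed.

Lemma inK_int {F : fieldType} {v : F -> int} (A : 'M[F]_3) : inK v A -> intm v A.
Proof. by case. Qed.

Lemma inK_mul {F : fieldType} {v : F -> int} {p q : nat} (HF : padic_field v p q)
  (A B : 'M[F]_3) : inK v A -> inK v B -> inK v (A *m B).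
Proof.
move=> [hA [dA vA]] [hB [dB vB]]; split; first exact: (mul_int HF).
rewrite det_mulmx mulf_neq0 //; split=> //.
by rewrite (v_mul HF dA dB) vA vB.
Qed.

Lemma cofactor_int {F : fieldType} {v : F -> int} {p q : nat} (HF : padic_field v p q) {n : nat}
  (A : 'M[F]_n.+1) i j : intm v A -> inR v (cofactor A i j).
Proof.
move=> hA; rewrite /cofactor.
have hd : inR v (\det (row' i (col' j A))).
  by apply: (det_int HF) => k l; rewrite !mxE; exact: hA.
by have := vgeM HF (inR_sign HF (i + j)) hd; rewrite addr0.
Qed.

Lemma inK_inv {F : fieldType} {v : F -> int} {p q : nat} (HF : padic_field v p q)
  (A : 'M[F]_3) : inK v A -> inK v (invmx A).
Proof.
move=> [hA [dA vA]].
have uA : A \in unitmx by rewrite unitmxE unitfE.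
split; last first.
  rewrite det_inv invr_eq0 dA; split=> //.
  by rewrite (vV HF _ dA) vA.
move=> i j; rewrite /invmx uA !mxE.
have hd : inR v (\det A)^-1 by right; rewrite (vV HF _ dA) vA.
by have := vgeM HF hd (cofactor_int HF A j i hA); rewrite addr0.
Qed.

Lemma inK1 {F : fieldType} {v : F -> int} {p q : nat} (HF : padic_field v p q) :
  inK v (1%:M : 'M[F]_3).
Proof.
split; last by rewrite det1 oner_eq0 (v1 HF).
move=> i j; rewrite mxE; case: (i == j); rewrite /inR /vge ?(v1 HF); by [right | left].
Qed.

Lemma inK_col_prim {F : fieldType} {v : F -> int} {p q : nat} (HF : padic_field v p q)
  (A : 'M[F]_3) j : inK v A -> exists i, isunit v (A i j).
Proof.
move=> [hA [dA vA]]; apply: NNPP => hn.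
have h : forall i, vge v (A i j) 1.
  move=> i; apply: (nonunit (hA i j)); apply/negP => u; apply: hn; by exists i.
have : vge v (\det A) 1.
  rewrite (expand_det_col A j); apply: (vge_sum HF) => i.
  by have := vgeM HF (h i) (cofactor_int HF A i j hA); rewrite addr0.
by case=> [/eqP|]; [rewrite (negbTE dA) | rewrite vA].
Qed.

Lemma inK_row_prim {F : fieldType} {v : F -> int} {p q : nat} (HF : padic_field v p q)
  (A : 'M[F]_3) i : inK v A -> exists j, isunit v (A i j).
Proof.
move=> [hA [dA vA]]; apply: NNPP => hn.
have h : forall j, vge v (A i j) 1.
  move=> j; apply: (nonunit (hA i j)); apply/negP => u; apply: hn; by exists j.
have : vge v (\det A) 1.
  rewrite (expand_det_row A i); apply: (vge_sum HF) => j.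
  by have := vgeM HF (h j) (cofactor_int HF A i j hA); rewrite addr0.
by case=> [/eqP|]; [rewrite (negbTE dA) | rewrite vA].
Qed.
Lemma sum3 {R : nmodType} (f : 'I_3 -> R) : \sum_k f k = f o0 + f o1 + f o2.
Proof.
rewrite !big_ord_recl big_ord0 addr0 addrA.
by congr (_ + _ + _); congr f; apply: val_inj.
Qed.

Lemma inK_unitmx {F : fieldType} {v : F -> int} (A : 'M[F]_3) : inK v A -> A \in unitmx.
Proof. by case=> _ [dA _]; rewrite unitmxE unitfE. Qed.

Lemma rowcong {F : fieldType} {v : F -> int} {p q : nat} (HF : padic_field v p q)
  (P Q : 'I_3 -> F) (c : F) (b : int) (M : 'M[F]_3) j :
  (forall k, vge v (P k - c * Q k) b) -> intm v M ->
  vge v (\sum_k P k * M k j - c * \sum_k Q k * M k j) b.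
Proof.
move=> hPQ hM; rewrite mulr_sumr -sumrB; apply: (vge_sum HF) => k.
rewrite mulrA -mulrBl; have := vgeM HF (hPQ k) (hM k j); by rewrite addr0.
Qed.

Lemma Wrow {F : fieldType} {v : F -> int} {p q : nat} (HF : padic_field v p q)
  (B t : 'M[F]_3) (c : F) (b : int) j :
  inK v B -> inK v t -> isunit v c -> (forall k, vge v (B o2 k - c * t o2 k) b) ->
  j != o2 -> vge v ((t *m invmx B) o2 j) b.
Proof.
move=> hB ht uc hc jn.
have h := rowcong HF (B o2) (t o2) c b (invmx B) j hc (inK_int _ (inK_inv HF B hB)).
have e1 : \sum_k B o2 k * invmx B k j = 0.
  have := congr1 (fun M : 'M[F]_3 => M o2 j) (mulmxV (inK_unitmx B hB)).
  by rewrite /= !mxE eq_sym (negbTE jn) => ->.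
rewrite e1 sub0r in h; have h' := vgeN HF h; rewrite opprK in h'.
by apply: (vge_unitM HF uc); rewrite mxE.
Qed.

Lemma Urow {F : fieldType} {v : F -> int} {p q : nat} (HF : padic_field v p q)
  (B t : 'M[F]_3) (c : F) (b : int) j :
  inK v B -> inK v t -> (forall k, vge v (B o2 k - c * t o2 k) b) ->
  j != o2 -> vge v ((B *m invmx t) o2 j) b.
Proof.
move=> hB ht hc jn.
have h := rowcong HF (B o2) (t o2) c b (invmx t) j hc (inK_int _ (inK_inv HF t ht)).
have e1 : \sum_k t o2 k * invmx t k j = 0.
  have := congr1 (fun M : 'M[F]_3 => M o2 j) (mulmxV (inK_unitmx t ht)).
  by rewrite /= !mxE eq_sym (negbTE jn) => ->.
by rewrite e1 mulr0 subr0 in h; rewrite mxE.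
Qed.
Lemma vgeM' {F : fieldType} {v : F -> int} {p q : nat} (HF : padic_field v p q) {x y : F} {k l m : int} :
  vge v x k -> vge v y l -> k + l = m -> vge v (x * y) m.
Proof. by move=> hx hy <-; exact: (vgeM HF hx hy). Qed.

Definition yv {F : fieldType} (pi : F) (b : nat) (W : 'M[F]_3) : 'I_3 -> F :=
  fun i => if i == o2 then W o2 o0 / pi ^+ b else W i o0.

Lemma core {F : fieldType} {v : F -> int} {p q : nat} (HF : padic_field v p q) (pi : F)
  (a b : nat) (B B' t : 'M[F]_3) (c c' e : F) :
  pi != 0 -> v pi = 1 ->
  inK v B -> inK v B' -> inK v t -> isunit v c -> isunit v c' -> isunit v e ->
  (forall k, vge v (B o2 k - c * t o2 k) b) ->
  (forall k, vge v (B' o2 k - c' * t o2 k) b) ->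
  (forall i, vge v (yv pi b (t *m invmx B') i - e * yv pi b (t *m invmx B) i) a) ->
  vge v ((B' *m invmx B) o1 o0) a /\ vge v ((B' *m invmx B) o2 o0) (a + b)%N /\
  vge v ((B' *m invmx B) o2 o1) b.
Proof.
move=> p0 vp hB hB' ht uc uc' ue hc hc' hy.
set W := t *m invmx B; set W' := t *m invmx B'; set U' := B' *m invmx t.
have hU : U' *m W = B' *m invmx B.
  by rewrite /U' /W mulmxA -(mulmxA B') (mulVmx (inK_unitmx t ht)) mulmx1.
have hU1 : U' *m W' = 1%:M.
  by rewrite /U' /W' mulmxA -(mulmxA B') (mulVmx (inK_unitmx t ht)) mulmx1 (mulmxV (inK_unitmx B' hB')).
have iU : intm v U' by apply: inK_int; apply: (inK_mul HF) => //; apply: (inK_inv HF).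
have iW : intm v W by apply: inK_int; apply: (inK_mul HF) => //; apply: (inK_inv HF).
set dl := fun k => W' k o0 - e * W k o0.
have hd01 : forall k, k != o2 -> vge v (dl k) a.
  move=> k kn; have := hy k; by rewrite /yv (negbTE kn).
have hd2 : vge v (dl o2) (a + b)%N.
  have := hy o2; rewrite /yv eqxx => h.
  have pb : pi ^+ b != 0 by rewrite expf_neq0.
  have -> : dl o2 = pi ^+ b * (W' o2 o0 / pi ^+ b - e * (W o2 o0 / pi ^+ b)).
    by rewrite /dl; field; rewrite pb.
  apply: (vgeM' HF (k:=b%:Z) _ h); first by rewrite exprnP; apply: (vge_expz HF).
  by rewrite PoszD addrC.
have hda : forall k, vge v (dl k) a.
  move=> k; have [->|kn] := eqVneq k o2; last exact: hd01.
  by apply: vge_le hd2; rewrite PoszD lerDl.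
have key : forall i, e * (B' *m invmx B) i o0 = 1%:M i o0 - \sum_k U' i k * dl k.
  move=> i; rewrite -hU -hU1 !mxE mulr_sumr -sumrB; apply: eq_bigr => k _.
  by rewrite /dl; ring.
have Ub : forall k, k != o2 -> vge v (U' o2 k) b.
  by move=> k kn; apply: (Urow HF B' t c' b k hB' ht hc' kn).
split; [|split].
- apply: (vge_unitM HF ue); rewrite key mxE /= sub0r; apply: (vgeN HF).
  apply: (vge_sum HF) => k; exact: (vgeM' HF (iU o1 k) (hda k) (add0r _)).
- apply: (vge_unitM HF ue); rewrite key mxE /= sub0r; apply: (vgeN HF).
  rewrite sum3; apply: (vgeD HF); first apply: (vgeD HF).
  + by apply: (vgeM' HF (Ub o0 isT) (hd01 o0 isT)); rewrite PoszD addrC.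
  + by apply: (vgeM' HF (Ub o1 isT) (hd01 o1 isT)); rewrite PoszD addrC.
  + exact: (vgeM' HF (iU o2 o2) hd2 (add0r _)).
- rewrite -hU mxE sum3; apply: (vgeD HF); first apply: (vgeD HF).
  + exact: (vgeM' HF (Ub o0 isT) (iW o0 o1) (addr0 _)).
  + exact: (vgeM' HF (Ub o1 isT) (iW o1 o1) (addr0 _)).
  + exact: (vgeM' HF (iU o2 o2) (Wrow HF B t c b o1 hB ht uc hc isT) (add0r _)).
Qed.
Lemma vge_invpow {F : fieldType} {v : F -> int} {p q : nat} (HF : padic_field v p q) (pi : F) (b : nat) :
  pi != 0 -> v pi = 1 -> vge v (pi ^+ b)^-1 (- b%:Z).
Proof.
move=> p0 vp; right; rewrite (vV HF _ (expf_neq0 _ p0)) (vexpn HF _ _ p0) vp mulr1.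
by [].
Qed.

Lemma yv_good {F : fieldType} {v : F -> int} {p q : nat} (HF : padic_field v p q) (pi : F)
  (b : nat) (B t : 'M[F]_3) (c : F) :
  pi != 0 -> v pi = 1 -> inK v B -> inK v t -> isunit v c ->
  (forall k, vge v (B o2 k - c * t o2 k) b) ->
  (forall i, inR v (yv pi b (t *m invmx B) i)) /\ (exists i, isunit v (yv pi b (t *m invmx B) i)).
Proof.
move=> p0 vp hB ht uc hc.
have kW : inK v (t *m invmx B) by apply: (inK_mul HF) => //; apply: (inK_inv HF).
have iW := inK_int _ kW.
have W20 := Wrow HF B t c b o0 hB ht uc hc isT.
split.
  apply: ord3P; rewrite /yv /=; try exact: iW.
  by apply: (vgeM' HF W20 (vge_invpow HF pi b p0 vp)); rewrite subrr.
have [i ui] := inK_col_prim HF _ o0 kW.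
move: ui; apply: (ord3P (fun i => isunit v ((t *m invmx B) i o0) -> exists i, isunit v (yv pi b (t *m invmx B) i))).
- by move=> u; exists o0.
- by move=> u; exists o1.
case: b hc W20 => [|b] hc W20 u.
  by exists o2; rewrite /yv /= expr0 divr1.
exfalso; case/andP: u => u0 /eqP u1; case: W20 => [h|h].
  by rewrite h eqxx in u0.
by rewrite u1 in h.
Qed.

Lemma lamwK {F : fieldType} (pi : F) (l1 l2 l3 : int) :
  pi != 0 -> lamw pi l1 l2 l3 *m lamw pi (- l1) (- l2) (- l3) = 1%:M.
Proof.
move=> p0; rewrite /lamw mulmx_diag; apply/matrixP => i j; rewrite !mxE.
suff -> : pi ^ nth 0 [:: l1; l2; l3] i * pi ^ nth 0 [:: - l1; - l2; - l3] i = 1 by [].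
rewrite -expfzDr //; apply: (ord3P (fun i => pi ^ (nth 0 [:: l1; l2; l3] i + nth 0 [:: - l1; - l2; - l3] i) = 1)) => /=;
  by rewrite subrr expr0z.
Qed.

Lemma lamwK' {F : fieldType} (pi : F) (l1 l2 l3 : int) :
  pi != 0 -> lamw pi (- l1) (- l2) (- l3) *m lamw pi l1 l2 l3 = 1%:M.
Proof.
move=> p0; have := lamwK pi (- l1) (- l2) (- l3) p0; by rewrite !opprK.
Qed.

Lemma ent_ok {F : fieldType} {v : F -> int} {p q : nat} (HF : padic_field v p q) { pi x : F}
  {li lj k : int} :
  pi != 0 -> v pi = 1 -> vge v x k -> 0 <= li + k - lj -> vge v (pi ^ li * x * pi ^ (- lj)) 0.
Proof.
move=> p0 vp hx hl; apply: (vge_le v hl).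
apply: (vgeM' HF _ (vge_expz HF pi (- lj) p0 vp)) => //.
exact: (vgeM' HF (vge_expz HF pi li p0 vp) hx).
Qed.

Lemma lam_conj {F : fieldType} {v : F -> int} {p q : nat} (HF : padic_field v p q) (pi : F)
  (l1 l2 l3 : int) (a b : nat) (h : 'M[F]_3) :
  pi != 0 -> v pi = 1 -> l1 - l2 = a%:Z -> l2 - l3 = b%:Z -> inK v h ->
  vge v (h o1 o0) a -> vge v (h o2 o0) (a + b)%N -> vge v (h o2 o1) b ->
  inK v (lamw pi l1 l2 l3 *m h *m lamw pi (- l1) (- l2) (- l3)).
Proof.
move=> p0 vp e12 e23 hK h10 h20 h21.
have ih := inK_int _ hK.
have hi : intm v (lamw pi l1 l2 l3 *m h *m lamw pi (- l1) (- l2) (- l3)).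
  move=> i j; rewrite /lamw mul_diag_mx mul_mx_diag !mxE.
  move: i j; apply: ord3P; apply: ord3P => /=.
  all: try first [ apply: (ent_ok HF p0 vp (ih _ _)); rewrite ?addr0; lia
             | apply: (ent_ok HF p0 vp h10); lia
             | apply: (ent_ok HF p0 vp h20); rewrite PoszD; lia
             | apply: (ent_ok HF p0 vp h21); lia ].
have ed : \det (lamw pi l1 l2 l3 *m h *m lamw pi (- l1) (- l2) (- l3)) = \det h.
  rewrite !det_mulmx mulrAC -det_mulmx lamwK // det1 mul1r.
  by [].
by case: hK => _ hd; rewrite /inK ed.
Qed.
Lemma mk_same_dc {F : fieldType} {v : F -> int} {p q : nat} (HF : padic_field v p q) (pi : F)
  (n : nat) (l1 l2 l3 : int) (Ai Ak Bi Bk : 'M[F]_3) :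
  pi != 0 -> inZK v Ai -> inZK v Ak -> inK v Bi -> inK v Bk ->
  inK v (lamw pi l1 l2 l3 *m (Bk *m invmx Bi) *m lamw pi (- l1) (- l2) (- l3)) ->
  same_dc v n (Ai *m lamw pi l1 l2 l3 *m Bi) (Ak *m lamw pi l1 l2 l3 *m Bk).
Proof.
move=> p0 [zi [ki [[ai [ai0 ->]] [hki ->]]]] [zk [kk [[ak [ak0 ->]] [hkk ->]]]] hBi hBk hK.
set L := lamw pi l1 l2 l3; set L' := lamw pi (- l1) (- l2) (- l3).
set K := L *m (Bk *m invmx Bi) *m L'.
exists ((ak / ai)%:M *m (kk *m K *m invmx ki)), 1%:M.
split.
  exists (ak / ai)%:M, (kk *m K *m invmx ki); split.
    by exists (ak / ai); rewrite mulf_neq0 // invr_eq0.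
  split=> //; apply: (inK_mul HF); first exact: (inK_mul HF).
  exact: (inK_inv HF).
split.
  split; first exact: (inK1 HF).
  by move=> i j; rewrite subrr mxE; left.
rewrite mulmx1 !mul_scalar_mx -!scalemxAl -scalemxAr scalerA divfK //.
congr (_ *: _).
rewrite /K !mulmxA.
rewrite -(mulmxA _ (invmx ki) ki) (mulVmx (inK_unitmx ki hki)) mulmx1.
rewrite -(mulmxA _ L' L) lamwK' // mulmx1.
by rewrite -(mulmxA _ (invmx Bi) Bi) (mulVmx (inK_unitmx Bi hBi)) mulmx1.
Qed.
Definition Nk (q k : nat) : nat :=
  if k == 0%N then 1%N else (q ^ k * q ^ k + (q ^ k.-1 * q ^ k + q ^ k.-1 * q ^ k.-1))%N.

Lemma Nk_bound (q k m : nat) : (2 <= q)%N -> (k <= m)%N ->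
  ((Nk q k)%:R : rat) <= (q%:R) ^+ (2 * m) * (1 + 1 / q%:R + 1 / q%:R ^+ 2).
Proof.
move=> q2 km; set Q : rat := q%:R.
have Q2 : 2 <= Q by rewrite /Q (ler_nat rat 2 q).
have Q0 : Q != 0 by apply/eqP => h; rewrite h in Q2.
have Y1 : 1 <= Q ^+ (2 * m) by apply: exprn_ege1; lra.
have hphi : 1 <= 1 + 1 / Q + 1 / Q ^+ 2.
  have h1 : 0 <= 1 / Q by rewrite divr_ge0 //; lra.
  have h2 : 0 <= 1 / Q ^+ 2 by rewrite divr_ge0 // exprn_ge0 //; lra.
  lra.
rewrite /Nk; case: k km => [|k] km /=.
  rewrite -[1%:R]/(1 : rat); nra.
have -> : ((q ^ k.+1 * q ^ k.+1 + (q ^ k * q ^ k.+1 + q ^ k * q ^ k))%N%:R : rat)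
    = (Q ^+ (2 * k.+1)) * (1 + 1 / Q + 1 / Q ^+ 2).
  by rewrite !natrD !natrM !natrX -/Q mulnC !exprM !exprS; field; rewrite Q0.
rewrite ler_pM2r; last lra.
by apply: ler_weXn2l; [lra | rewrite leq_mul2l km].
Qed.

Lemma final_bound (q a b m : nat) : (2 <= q)%N -> (a <= m)%N -> (b <= m)%N ->
  (((Nk q b * Nk q a)%N)%:R : rat) <= (q%:R) ^+ (4 * m) * (1 + 1 / q%:R) ^+ 3.
Proof.
move=> q2 am bm; set Q : rat := q%:R.
have Q2 : 2 <= Q by rewrite /Q (ler_nat rat 2 q).
have Q0 : Q != 0 by apply/eqP => h; rewrite h in Q2.
have hb := Nk_bound q b m q2 bm; have ha := Nk_bound q a m q2 am.
rewrite natrM; apply: le_trans (ler_pM _ _ hb ha) _.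
- exact: ler0n.
- exact: ler0n.
set Y := Q ^+ (2 * m).
have -> : Q ^+ (4 * m) = Y * Y by rewrite /Y -exprD; congr (_ ^+ _); lia.
set t := 1 / Q.
have -> : 1 / Q ^+ 2 = t * t by rewrite /t expr2; field.
have t0 : 0 < t by rewrite /t divr_gt0 //; lra.
have t2 : t <= 1 / 2 by rewrite /t ler_pdivrMr; [rewrite mulrC -ler_pdivrMr |]; lra.
have Y0 : 0 <= Y by rewrite exprn_ge0 //; lra.
have h : (1 + t + t * t) * (1 + t + t * t) <= (1 + t) ^+ 3.
  rewrite !exprS expr0 mulr1; nra.
have YY : 0 <= Y * Y by nra.
have := ler_wpM2l YY h; rewrite -/t; nra.
Qed.
Definition optset {T : finType} (k : nat) : {set option T} :=
  if k == 0%N then [set None] else [set~ None].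

Lemma card_optset {T : finType} (k : nat) :
  #|(optset k : {set option T})| = if k == 0%N then 1%N else #|T|.
Proof.
rewrite /optset; case: (k == 0%N); first by rewrite cards1.
by rewrite cardsC1 card_option.
Qed.

Lemma count_codes (N : nat) (Ta Tb : finType) (ka kb : nat) (f : 'I_N -> option Tb * option Ta) :
  injective f -> (forall i, (f i).1 \in (optset kb : {set option Tb})) ->
  (forall i, (f i).2 \in (optset ka : {set option Ta})) ->
  (N <= (if kb == 0%N then 1%N else #|Tb|) * (if ka == 0%N then 1%N else #|Ta|))%N.
Proof.
move=> inj h1 h2.
rewrite -card_optset -card_optset -cardsX.
have -> : N = #|[set f x | x in [set: 'I_N]]| by rewrite card_imset // cardsT card_ord.
apply: subset_leq_card; apply/subsetP => y /imsetP [x _ ->].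
by case: (f x) (h1 x) (h2 x) => [y1 y2] /= g1 g2; rewrite in_setX g1 g2.
Qed.

Lemma card_T2 (q k : nat) : #|T2 q k| = (q ^ k * q ^ k + (q ^ k.-1 * q ^ k + q ^ k.-1 * q ^ k.-1))%N.
Proof. by rewrite /T2 !card_sum !card_prod !card_tuple card_ord. Qed.
Theorem lemma9p7 (F : fieldType) (v : F -> int) (p q : nat)
  (HF : padic_field v p q) (Hp2 : p != 2%N) (Hp3 : p != 3%N)
  (pi : F) (Hpi0 : pi != 0) (Hpi : v pi = 1)
  (n j : nat) (Hj1 : (1 <= j)%N) (Hjn : (j <= n)%N)
  (l1 l2 l3 : int) (H12 : l2 <= l1) (H23 : l3 <= l2)
  (Hmax : Num.max (l1 - l2) (l2 - l3) <= (n - j)%:Z)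
  (s : seq 'M[F]_3)
  (Hin : forall i, (i < size s)%N -> inZKlK v pi l1 l2 l3 (nth 0 s i))
  (Hdist : forall i k, (i < size s)%N -> (k < size s)%N -> i != k ->
             ~ same_dc v n (nth 0 s i) (nth 0 s k)) :
  ((size s)%:R : rat) <= (q%:R ^+ (4 * (n - j)) * (1 + 1 / q%:R) ^+ 3 : rat).
Proof.
have ha0 : 0 <= l1 - l2 by rewrite subr_ge0.
have hb0 : 0 <= l2 - l3 by rewrite subr_ge0.
case Ea: (l1 - l2) ha0 => [a|a] // _.
case Eb: (l2 - l3) hb0 => [b|b] // _.
have am : (a <= n - j)%N by move: Hmax; rewrite Ea Eb ge_max => /andP [h _]; rewrite -lez_nat.
have bm : (b <= n - j)%N by move: Hmax; rewrite Ea Eb ge_max => /andP [_ h]; rewrite -lez_nat.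
case: (resid_card HF) => s0 [s0sz [s0R [_ s0cov]]].
have inR1 : inR v (1 : F) by right; rewrite (v1 HF).
have [i0 i0q h0] := s0cov 0 (vge0 v 0).
have [i1 i1q h1] := s0cov 1 inR1.
have q0 : (0 < q)%N by apply: leq_ltn_trans i0q.
have q2 : (2 <= q)%N.
  have ne : i0 != i1.
    apply/eqP => e; subst i1; have := vgeB HF h1 h0.
    rewrite (_ : 1 - nth 0 s0 i0 - (0 - nth 0 s0 i0) = 1); last by ring.
    by case=> [/eqP|]; rewrite ?oner_eq0 ?(v1 HF).
  lia.
pose r := fun i : 'I_q => nth 0 s0 i.
have Hr : forall i, inR v (r i) by move=> i; apply: s0R (ltn_ord i).
have exd : forall x : F, exists i : 'I_q, inR v x -> vge v (x - r i) 1.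
  move=> x; case: (classic (inR v x)) => hx.
  - by have [i iq hi] := s0cov x hx; exists (Ordinal iq).
  - by exists (Ordinal q0) => /hx.
pose d := fun x => proj1_sig (constructive_indefinite_description _ (exd x)).
have Hd : forall x, inR v x -> vge v (x - r (d x)) 1.
  by move=> x; exact: (proj2_sig (constructive_indefinite_description _ (exd x))).
have exAB : forall i, exists AB : 'M[F]_3 * 'M[F]_3, (i < size s)%N ->
    inZK v AB.1 /\ inK v AB.2 /\ nth 0 s i = AB.1 *m lamw pi l1 l2 l3 *m AB.2.
  move=> i; case: (ltnP i (size s)) => hi.
  - by have [A [B [hA [hB e]]]] := Hin i hi; exists (A, B).
  - by exists (0, 0).
pose AB := fun i => proj1_sig (constructive_indefinite_description _ (exAB i)).
have HAB : forall i, (i < size s)%N -> inZK v (AB i).1 /\ inK v (AB i).2 /\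
    nth 0 s i = (AB i).1 *m lamw pi l1 l2 l3 *m (AB i).2.
  by move=> i; exact: (proj2_sig (constructive_indefinite_description _ (exAB i))).
pose code1 := fun M : 'M[F]_3 => p2code v r d pi b (fun jj => M o2 jj).
have ext : forall c : T2 q b, exists t : 'M[F]_3,
    (exists M, inK v M /\ code1 M = c) -> inK v t /\ code1 t = c.
  move=> c; case: (classic (exists M, inK v M /\ code1 M = c)) => [[M hM]|hn].
  - by exists M.
  - by exists 0 => h; case: (hn h).
pose tf := fun c => proj1_sig (constructive_indefinite_description _ (ext c)).
have Htf : forall M, inK v M -> inK v (tf (code1 M)) /\ code1 (tf (code1 M)) = code1 M.
  move=> M hM; apply: (proj2_sig (constructive_indefinite_description _ (ext (code1 M)))).
  by exists M.
pose code2 := fun M => p2code v r d pi a (yv pi b (tf (code1 M) *m invmx M)).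
pose N := size s.
pose f := fun i : 'I_N => ((if b == 0%N then None else Some (code1 (AB i).2)),
                           (if a == 0%N then None else Some (code2 (AB i).2))).
have finj : injective f.
  move=> i k e; apply: val_inj => /=; apply/eqP; apply/negPn/negP => ne.
  apply: (Hdist i k (ltn_ord i) (ltn_ord k) ne).
  have [hAi [hBi ei]] := HAB i (ltn_ord i).
  have [hAk [hBk ek]] := HAB k (ltn_ord k).
  have c1 : code1 (AB i).2 = code1 (AB k).2.
    case: (eqVneq b 0%N) => b0.
      by rewrite /code1 b0.
    by move: (congr1 fst e); rewrite /f /= (negbTE b0) => -[].
  have c2 : code2 (AB i).2 = code2 (AB k).2.
    case: (eqVneq a 0%N) => a0.
      by rewrite /code2 a0.
    by move: (congr1 snd e); rewrite /f /= (negbTE a0) => -[].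
  have [ht ct] := Htf _ hBi.
  set t := tf (code1 (AB i).2) in ht ct.
  have ct' : code1 t = code1 (AB k).2 by rewrite ct c1.
  have [c [uc hc]] := p2code_eq HF r d pi Hpi0 Hpi Hd Hr b (fun jj => t o2 jj)
    (fun jj => (AB i).2 o2 jj) (fun jj => inK_int _ ht o2 jj) (fun jj => inK_int _ hBi o2 jj)
    (inK_row_prim HF t o2 ht) (inK_row_prim HF _ o2 hBi) ct.
  have [c' [uc' hc']] := p2code_eq HF r d pi Hpi0 Hpi Hd Hr b (fun jj => t o2 jj)
    (fun jj => (AB k).2 o2 jj) (fun jj => inK_int _ ht o2 jj) (fun jj => inK_int _ hBk o2 jj)
    (inK_row_prim HF t o2 ht) (inK_row_prim HF _ o2 hBk) ct'.
  have [yi_int yi_prim] := yv_good HF pi b (AB i).2 t c Hpi0 Hpi hBi ht uc hc.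
  have [yk_int yk_prim] := yv_good HF pi b (AB k).2 t c' Hpi0 Hpi hBk ht uc' hc'.
  have c2' : p2code v r d pi a (yv pi b (t *m invmx (AB i).2)) =
             p2code v r d pi a (yv pi b (t *m invmx (AB k).2)).
    by move: c2; rewrite /code2 -c1.
  have [e' [ue he]] := p2code_eq HF r d pi Hpi0 Hpi Hd Hr a _ _ yi_int yk_int yi_prim yk_prim c2'.
  have [h10 [h20 h21]] := core HF pi a b (AB i).2 (AB k).2 t c c' e' Hpi0 Hpi hBi hBk ht
    uc uc' ue hc hc' he.
  have hK : inK v ((AB k).2 *m invmx (AB i).2).
    by apply: (inK_mul HF) => //; apply: (inK_inv HF).
  have kap := lam_conj HF pi l1 l2 l3 a b _ Hpi0 Hpi Ea Eb hK h10 h20 h21.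
  by rewrite ei ek; exact: (mk_same_dc HF pi n l1 l2 l3 _ _ _ _ Hpi0 hAi hAk hBi hBk kap).
have cnt := count_codes N _ _ a b f finj.
have cnt' : (N <= Nk q b * Nk q a)%N.
  rewrite /Nk -!card_T2; apply: cnt => i; rewrite /f /optset /=.
  - by case: (b == 0%N); rewrite ?in_set1 ?in_setC1.
  - by case: (a == 0%N); rewrite ?in_set1 ?in_setC1.
apply: (le_trans _ (final_bound q a b (n - j) q2 am bm)).
by rewrite ler_nat.
Qed.
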